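(* Let $\mathbf{X}=\{X_n\}_{n\ge0}$ be a real-valued integrable process adapted to a filtration $\{\mathcal{F}_n\}_{n\ge0}$ satisfying (D1), (D4), (A3) and (A4). Then $X_n$ possesses a finite limit a.e. If in addition $\mathbf{X}$ satisfies (D2), then $X_n\to0$ a.e.
   Context: Residuals: $\epsilon_n=X_n-E[X_n\mid\mathcal{F}_{n-1}]$, $n\ge1$; $M_{1,n}=\sum_{i=1}^n\epsilon_i$. $U_n=E[X_n\mid\mathcal{F}_{n-1}]\,I\{X_{n-1}=0\}$. (D1) For every $\delta>0$ there are constants $\alpha_n(\delta)\ge0$ with $\sum_n\alpha_n(\delta)<\infty$ such that, a.e. on $\{|X_{n-1}|>\delta\}$, $0\le E[X_n\mid\mathcal{F}_{n-1}]/X_{n-1}\le1+\alpha_n(\delta)$, for all $n\ge1$. (D2) For every pair $0<\delta_1<\delta_2<\infty$ there are constants $0\le k_n\le1$ (depending on $\delta_1,\delta_2$) with $\sum_n(1-k_n)=\infty$ such that, a.e. on $\{|X_{n-1}|\in(\delta_1,\delta_2)\}$, $0\le E[X_n\mid\mathcal{F}_{n-1}]/X_{n-1}\le k_n$, for all $n\ge1$. (D4) For every $\delta>0$ there is a constant $\kappa_\delta<\infty$ such that $|E[X_n\mid\mathcal{F}_{n-1}]|\le\kappa_\delta$ a.e. on $\{|X_{n-1}|\in(0,\delta]\}$ for all $n\ge1$, and $\lim_{\delta\downarrow0}\kappa_\delta=0$. (A3) $\lim_n U_n=0$ a.e. (A4) $M_{1,n}$ possesses a finite limit a.e. *)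

(* Defs.v *)
From HB Require Import structures.
From mathcomp Require Import all_boot all_order all_algebra.
From mathcomp Require Import all_classical all_reals all_analysis.
Set Implicit Arguments. Unset Strict Implicit. Unset Printing Implicit Defensive.
Import Order.TTheory GRing.Theory Num.Theory.
Import numFieldNormedType.Exports.
Local Open Scope classical_set_scope.
Local Open Scope ring_scope.

Definition sub_sigma_algebra d (T : measurableType d) (G : set (set T)) :=
  sigma_algebra setT G /\ G `<=` measurable.

Definition filtration d (T : measurableType d) (F : nat -> set (set T)) :=
  (forall n, sub_sigma_algebra (F n)) /\ (forall n A, F n A -> F n.+1 A).

Definition G_measurable d (T : measurableType d) (R : realType)
  (G : set (set T)) (f : T -> R) :=
  forall B : set R, measurable B -> G (f @^-1` B).

Definition is_cond_exp d (T : measurableType d) (R : realType)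
  (P : probability T R) (G : set (set T)) (X Y : T -> R) :=
  [/\ G_measurable G Y, P.-integrable setT (EFin \o Y) &
      forall A, G A ->
        (\int[P]_(x in A) (Y x)%:E = \int[P]_(x in A) (X x)%:E)%E].

(* Main.v *)
Require Import Defs.
From HB Require Import structures.
From mathcomp Require Import all_boot all_order all_algebra.
From mathcomp Require Import all_classical all_reals all_analysis.
From mathcomp Require Import ring lra zify.
Set Implicit Arguments. Unset Strict Implicit. Unset Printing Implicit Defensive.
Import Order.TTheory GRing.Theory Num.Theory.
Import numFieldNormedType.Exports.
Local Open Scope classical_set_scope.
Local Open Scope ring_scope.

Lemma cauchy_seqR (R : realType) (u : nat -> R) : cvgn u ->
  forall e : R, 0 < e -> exists N, forall p q, (N <= p)%N -> (N <= q)%N ->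
    `|u p - u q| <= e.
Proof.
move=> /cvg_ex [l ul] e e0.
have /cvgrPdist_le/(_ (e / 2)) : u @ \oo --> l by [].
have e20 : 0 < e / 2 by rewrite divr_gt0.
move=> /(_ e20) [N _ HN]; exists N => p q Np Nq.
have h1 := HN p Np; have h2 := HN q Nq; rewrite /= in h1 h2.
have -> : u p - u q = (l - u q) - (l - u p) by ring.
apply: (le_trans (ler_normB _ _)); lra.
Qed.

Lemma nnseries_bounded (R : realType) (a : nat -> R) :
  (forall n, 0 <= a n) -> (\sum_(1 <= n <oo) (a n)%:E < +oo)%E ->
  cvgn (fun n => \sum_(1 <= k < n.+1) a k).
Proof.
move=> a0 afin.
apply: nondecreasing_is_cvgn.
  apply/nondecreasing_seqP => n; rewrite [X in _ <= X]big_nat_recr //=.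
  by rewrite lerDl.
have E0 : (0 <= \sum_(1 <= n <oo) (a n)%:E)%E.
  by apply: nneseries_ge0 => n _ _; rewrite lee_fin.
exists (fine (\sum_(1 <= n <oo) (a n)%:E)) => _ [n _ <-].
rewrite -lee_fin fineK; last by rewrite ge0_fin_numE.
rewrite -sumEFin.
by apply: nneseries_lim_ge => k _ _; rewrite lee_fin.
Qed.
Lemma gron (R : realType) (v a : nat -> R) (eta : R) (m b : nat) :
  0 <= eta -> (forall k, 0 <= a k) -> (m <= b)%N ->
  \sum_(m.+1 <= k < b.+1) a k <= 1/4 ->
  (forall k, (m < k <= b)%N -> v k <= (1 + a k) * v k.-1 + a k * eta) ->
  v b <= 2 * (Num.max (v m) 0 + eta).
Proof.
move=> eta0 a0 mb Sb step.
set W := Num.max (v m) 0 + eta.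
have W0 : eta <= W by rewrite /W lerDr le_max lexx orbT.
have vW : v m <= W by rewrite /W (@le_trans _ _ (Num.max (v m) 0)) ?le_max ?lexx // lerDl.
suff H : forall j, (m + j <= b)%N ->
  v (m + j)%N <= (1 + 4 * \sum_(m.+1 <= k < (m + j)%N.+1) a k) * W.
  have := H (b - m)%N; rewrite subnKC // leqnn => /(_ isT) H1.
  apply: (le_trans H1).
  have hW : 0 <= W by exact: le_trans eta0 W0.
  by rewrite ler_wpM2r //; lra.
elim=> [|j IH] hj.
  by rewrite addn0 big_geq // mulr0 addr0 mul1r.
have hj' : (m + j <= b)%N by rewrite (leq_trans _ hj) // leq_add2l.
have IH' := IH hj'; rewrite addnS big_nat_recr /=; last by lia.
set S := \sum_(m.+1 <= k < (m + j)%N.+1) a k in IH' *.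
have S0 : 0 <= S by apply: sumr_ge0 => k _; apply: a0.
have SS : S + a (m + j).+1 <= 1/4.
  apply: le_trans Sb.
  rewrite -big_nat_recr /=; last by lia.
  rewrite [X in _ <= X](big_cat_nat _ (n := (m + j).+2)) /=; [|lia|lia].
  by rewrite lerDl sumr_ge0.
have st := step (m + j)%N.+1; rewrite /= in st.
have st' : v (m + j).+1 <= (1 + a (m + j).+1) * v (m + j)%N + a (m + j).+1 * eta.
  by apply: st; apply/andP; split; lia.
have ha := a0 (m + j)%N.+1.
set A := a (m + j)%N.+1 in st' ha SS *.
set V := v (m + j)%N in IH' st'.
apply: (le_trans st').
have h1 : (1 + A) * V <= (1 + A) * ((1 + 4 * S) * W) by rewrite ler_wpM2l //; lra.
have hW : 0 <= W by exact: le_trans eta0 W0.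
have h2 : 0 <= A * ((3 - 4 * S) * W - eta).
  apply: mulr_ge0 => //.
  have : 2 * W <= (3 - 4 * S) * W by rewrite ler_wpM2r //; lra.
  lra.
have e1 : (1 + A) * ((1 + 4 * S) * W) = (1 + 4 * S) * W + A * ((1 + 4 * S) * W) by ring.
have e2 : (1 + 4 * (S + A)) * W = (1 + 4 * S) * W + 4 * A * W by ring.
have e3 : A * ((3 - 4 * S) * W - eta) = 4 * A * W - A * ((1 + 4 * S) * W) - A * eta by ring.
rewrite e2; lra.
Qed.

Lemma excursion (R : realType) (x c s al : nat -> R) (eta : R) (a b : nat) :
  0 <= eta -> (forall k, 0 <= al k) -> (a <= b)%N ->
  \sum_(a.+1 <= k < b.+1) al k <= 1/4 ->
  (forall k, (a < k <= b)%N -> x k = c k + (s k - s k.-1)) ->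
  (forall k, (a < k <= b)%N -> c k <= (1 + al k) * x k.-1) ->
  (forall k, (a <= k <= b)%N -> `|s k - s a| <= eta) ->
  x b <= 2 * (Num.max (x a) 0 + eta) + eta.
Proof.
move=> eta0 al0 ab Sb hx hc hs.
pose v k := x k - (s k - s a).
have := @gron R v al eta a b eta0 al0 ab Sb.
have va : v a = x a by rewrite /v subrr subr0.
rewrite va => G.
have vb : x b = v b + (s b - s a) by rewrite /v; ring.
have sb : s b - s a <= eta.
  by apply: le_trans (ler_norm _) (hs b _); rewrite ab leqnn.
rewrite vb; suff : v b <= 2 * (Num.max (x a) 0 + eta) by lra.
apply: G => k hk.
have hk1 : (a <= k.-1 <= b)%N by apply/andP; split; lia.
have d := hs _ hk1.
have hd : s k.-1 - s a <= eta by apply: le_trans (ler_norm _) d.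
have xk := hx k hk; have ck := hc k hk.
have ea : al k * (s k.-1 - s a) <= al k * eta by rewrite ler_wpM2l.
have : v k = c k - x k.-1 + v k.-1 by rewrite /v xk; ring.
move=> ->.
have : x k.-1 = v k.-1 + (s k.-1 - s a) by rewrite /v; ring.
move=> e1; rewrite e1 in ck.
have e2 : (1 + al k) * (v k.-1 + (s k.-1 - s a)) = (1 + al k) * v k.-1 + al k * (s k.-1 - s a) + (s k.-1 - s a) by ring.
rewrite e1; lra.
Qed.

Lemma cvgn_shift (R : realType) (u : nat -> R) K :
  cvgn (fun n => u (n + K)%N) <-> cvgn u.
Proof.
split => /cvg_ex [l ul]; apply/cvg_ex; exists l.
  by rewrite -(cvg_shiftn K).
by rewrite (cvg_shiftn K).
Qed.

Lemma sum_split (R : realType) (al : nat -> R) K b : (K <= b)%N ->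
  \sum_(K.+1 <= k < b.+1) al k =
  \sum_(1 <= k < b.+1) al k - \sum_(1 <= k < K.+1) al k.
Proof.
move=> Kb; rewrite [X in _ = X - _](big_cat_nat _ (n := K.+1) (m := 1%N) (p := b.+1)) //=.
ring.
Qed.

Lemma pos_case (R : realType) (x c s al : nat -> R) (N : nat) :
  (forall k, 0 <= al k) -> (\sum_(1 <= n <oo) (al n)%:E < +oo)%E ->
  (forall k, (0 < k)%N -> x k = c k + (s k - s k.-1)) -> cvgn s ->
  (forall k, (N < k)%N -> c k <= (1 + al k) * x k.-1) ->
  (forall n, (N <= n)%N -> 0 <= x n) ->
  cvgn x.
Proof.
move=> al0 alfin hx cs hc xpos.
pose A n := \sum_(1 <= k < n.+1) al k.
have cA : cvgn A by exact: nnseries_bounded.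
have q4 : (0 : R) < 1/4 by lra.
have [N1 HN1] := cauchy_seqR cA q4.
have [N2 HN2] := cauchy_seqR cs ltr01.
pose K := (N + N1 + N2)%N.
pose B := 2 * (Num.max (x K) 0 + 1) + 1.
have B0 : 0 <= B.
  have : 0 <= Num.max (x K) 0 by rewrite le_max lexx orbT.
  rewrite /B; lra.
have xB : forall b, (K <= b)%N -> x b <= B.
  move=> b Kb; apply: (@excursion R x c s al 1 K b) => //.
  - rewrite sum_split //; apply: le_trans (ler_norm _) _; apply: HN1; lia.
  - by move=> k /andP[h _]; apply: hx; lia.
  - by move=> k /andP[h _]; apply: hc; lia.
  - by move=> k /andP[h1 h2]; apply: HN2; lia.
pose z n := x (n + K)%N - s (n + K)%N - B * A (n + K)%N.
have zdec : nonincreasing_seq z.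
  apply/nonincreasing_seqP => n.
  rewrite /z addSn /A big_nat_recr //=.
  have e := hx (n + K).+1 isT; rewrite /= in e.
  have NK : (N < (n + K).+1)%N by rewrite /K; lia.
  have KK : (K <= n + K)%N by lia.
  have h1 := hc (n + K).+1 NK; rewrite /= in h1.
  have h2 := xB (n + K)%N KK.
  have h3 := al0 (n + K).+1.
  have h4 : al (n + K).+1 * x (n + K)%N <= al (n + K).+1 * B by rewrite ler_wpM2l.
  rewrite e.
  have e2 : (1 + al (n + K).+1) * x (n + K)%N = x (n + K)%N + al (n + K).+1 * x (n + K)%N by ring.
  rewrite e2 in h1 |- *.
  lra.
have zlb : has_lbound (range z).
  exists (- (`|s K| + 1) - B * (`|A K| + 1/4)) => _ [n _ <-].
  rewrite /z.
  have l1 : (N <= n + K)%N by rewrite /K; lia.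
  have l2 : (N2 <= n + K)%N by rewrite /K; lia.
  have l3 : (N2 <= K)%N by rewrite /K; lia.
  have l4 : (N1 <= n + K)%N by rewrite /K; lia.
  have l5 : (N1 <= K)%N by rewrite /K; lia.
  have h1 := xpos (n + K)%N l1.
  have h2 := HN2 (n + K)%N K l2 l3.
  have h3 := HN1 (n + K)%N K l4 l5.
  have h4 : s (n + K)%N <= `|s K| + 1.
    have := ler_norm (s (n + K)%N - s K); have := ler_norm (s K); move=> ? ?; lra.
  have h5 : A (n + K)%N <= `|A K| + 1/4.
    have := ler_norm (A (n + K)%N - A K); have := ler_norm (A K); move=> ? ?; lra.
  have h6 : B * A (n + K)%N <= B * (`|A K| + 1/4) by rewrite ler_wpM2l.
  lra.
have cz : cvgn z by exact: nonincreasing_is_cvgn.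
apply/(cvgn_shift _ K).
have -> : (fun n => x (n + K)%N) = (fun n => z n + s (n + K)%N + B * A (n + K)%N).
  by apply/funext => n; rewrite /z; ring.
apply: is_cvgD; first apply: is_cvgD => //.
  by apply/(cvgn_shift s K).
apply: is_cvgMr.
by apply/(cvgn_shift A K).
Qed.

Local Open Scope nat_scope.
Lemma last_index (p : pred nat) (m0 n : nat) : (m0 <= n)%N -> p m0 ->
  exists j, [/\ (m0 <= j <= n)%N, p j & forall k, (j < k <= n)%N -> ~~ p k].
Proof.
move=> hn pm0.
suff H : forall t, exists j, [/\ (m0 <= j <= m0 + t)%N, p j &
    forall k, (j < k <= m0 + t)%N -> ~~ p k].
  by have := H (n - m0)%N; rewrite subnKC.
elim=> [|t [j [hj xj hk]]].
  by exists m0; split => //; [rewrite addn0 leqnn; lia | move=> k; rewrite addn0; lia].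
case pt: (p ((m0 + t.+1)%N)).
  by exists ((m0 + t.+1)%N); split => //; [lia | move=> k; lia].
exists j; split => //; first by lia.
move=> k hk'; have [->|ne] := eqVneq k ((m0 + t.+1)%N); first by rewrite pt.
by apply: hk; lia.
Qed.

Local Open Scope ring_scope.
Ltac nlia := repeat match goal with H : ?T |- _ =>
  lazymatch T with
  | is_true (leq _ _) => fail
  | is_true (andb (leq _ _) (leq _ _)) => fail
  | is_true (negb (@eq_op _ _ _)) => fail
  | @eq nat _ _ => fail
  | _ => clear H
  end end; lia.

Lemma inv_anti (R : realType) (m1 m : nat) : (m1 <= m)%N ->
  (m.+1%:R : R)^-1 <= (m1.+1%:R)^-1.
Proof.
move=> h; rewrite lef_pV2 ?posrE ?ltr0Sn // ler_nat; nlia.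
Qed.

Lemma inv_small (R : realType) (e : R) : 0 < e ->
  exists M : nat, forall m, (M <= m)%N -> (m.+1%:R : R)^-1 <= e.
Proof.
move=> e0; exists (Num.truncn e^-1) => m hm.
rewrite -[e]invrK lef_pV2 ?posrE ?ltr0Sn ?invr_gt0 //.
apply: le_trans (ltW (truncnS_gt _)) _; by rewrite ler_nat ltnS.
Qed.

Lemma inv_pos (R : realType) (m : nat) : 0 < (m.+1%:R : R)^-1.
Proof. by rewrite invr_gt0 ltr0Sn. Qed.

Lemma le_of_div (R : realType) (c x t : R) : 0 < x -> c / x <= t -> c <= t * x.
Proof. by move=> x0; rewrite ler_pdivrMr. Qed.

Lemma nonpos_of_div (R : realType) (c x : R) : x < 0 -> 0 <= c / x -> c <= 0.
Proof.
move=> x0 h; have -> : c = c / x * x by rewrite divfK // lt_eqF.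
by rewrite mulr_ge0_le0 // ltW.
Qed.

Definition HD1 (R : realType) (x c : nat -> R) := forall m : nat,
  exists al : nat -> R, (forall n, 0 <= al n) /\
    (\sum_(1 <= n <oo) (al n)%:E < +oo)%E /\
    forall n, (0 < n)%N -> (m.+1%:R)^-1 < `|x n.-1| ->
      0 <= c n / x n.-1 <= 1 + al n.
Definition HD4 (R : realType) (x c : nat -> R) := forall e : R, 0 < e ->
  exists m : nat, forall n, (0 < n)%N -> 0 < `|x n.-1| <= (m.+1%:R)^-1 ->
    `|c n| <= e.
Definition HA3 (R : realType) (x c : nat -> R) :=
  (fun n => c n.+1 * (x n == 0)%:R) @ \oo --> (0 : R).
Definition HS (R : realType) (x c s : nat -> R) :=
  (forall k, (0 < k)%N -> x k = c k + (s k - s k.-1)) /\ cvgn s.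

Lemma upper_case (R : realType) (x c s : nat -> R) :
  HS x c s -> HD1 x c -> HD4 x c -> HA3 x c ->
  (forall m N, exists n, (N <= n)%N /\ x n <= (m.+1%:R)^-1) ->
  forall e : R, 0 < e -> exists N, forall n, (N <= n)%N -> x n <= e.
Proof.
move=> [hx cs] hD1 hD4 hA3 io e e0.
pose e' := e / 7.
have e'0 : 0 < e' by rewrite /e' divr_gt0.
have ee : 7 * e' = e by rewrite /e'; field.
have [m1 Hm1] := hD4 e' e'0.
have [M HM] := inv_small e'0.
pose m := (m1 + M)%N.
pose d := (m.+1%:R : R)^-1.
have d0 : 0 < d by exact: inv_pos.
have de : d <= e' by apply: HM; rewrite /m leq_addl.
have dm1 : d <= (m1.+1%:R)^-1 by apply: inv_anti; rewrite /m leq_addr.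
have [al [al0 [alfin Hal]]] := hD1 m.
pose A n := \sum_(1 <= k < n.+1) al k.
have cA : cvgn A by exact: nnseries_bounded.
have q4 : (0 : R) < 1/4 by lra.
have [N1 HN1] := cauchy_seqR cA q4.
have [N2 HN2] := cauchy_seqR cs e'0.
have [N3 _ HN3] := (cvgrPdist_le _ _).1 hA3 e' e'0.
pose K := (N1 + N2 + N3)%N.
have K1 : (N1 <= K)%N by rewrite /K -addnA leq_addr.
have K2 : (N2 <= K)%N by rewrite /K addnAC leq_addl.
have K3 : (N3 <= K)%N by rewrite /K leq_addl.
have [m0 [Km0 xm0]] := io m K.
exists m0 => n hn.
have [j [hj xj hk]] := last_index (p := fun k => x k <= d) hn xm0.
have [jn|jn] := eqVneq j n.
  by rewrite -jn; lra.
have jn' : (j < n)%N by nlia.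
have Kj : (K <= j)%N by nlia.
have cj : c j.+1 <= e'.
  have [x0|xn0] := eqVneq (x j) 0.
    have := HN3 j (_ : (N3 <= j)%N); rewrite /= x0 eqxx mulr1 sub0r normrN.
    move=> h; apply: le_trans (ler_norm _) (h _); nlia.
  have [xs|xb] := leP `|x j| d.
    apply: le_trans (ler_norm _) _; apply: (Hm1 j.+1) => //=.
    by rewrite normr_gt0 xn0 /= (le_trans xs dm1).
  have := Hal j.+1 isT xb; rewrite /= => /andP[h _].
  have xneg : x j < 0.
    rewrite ltNge; apply/negP => h0; move: xb; rewrite ger0_norm //; lra.
  have := nonpos_of_div xneg h; lra.
have xj1 : x j.+1 <= 2 * e'.
  rewrite (hx j.+1 isT) /=.
  have l1 : (N2 <= j.+1)%N by nlia.
  have l2 : (N2 <= j)%N by nlia.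
  have h := HN2 j.+1 j l1 l2.
  have := ler_norm (s j.+1 - s j); lra.
have mx : Num.max (x j.+1) 0 <= 2 * e'.
  by rewrite ge_max xj1 /=; lra.
have HH : x n <= 2 * (Num.max (x j.+1) 0 + e') + e'.
  apply: (@excursion R x c s al e' j.+1 n (ltW e'0) al0 jn').
  - rewrite sum_split //; apply: le_trans (ler_norm _) _; apply: HN1; nlia.
  - by move=> k /andP[h _]; apply: hx; nlia.
  - move=> k /andP[h1 h2].
    have hh : (j < k.-1 <= n)%N by nlia.
    have xk : d < x k.-1 by move: (hk _ hh); rewrite /= -ltNge.
    have k0 : (0 < k)%N by nlia.
    have xk' : d < `|x k.-1| by rewrite gtr0_norm //; lra.
    have /andP[_ h] := Hal k k0 xk'.
    apply: le_of_div => //; lra.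
  - by move=> k /andP[h1 h2]; apply: HN2; nlia.
lra.
Qed.


Lemma HS_neg (R : realType) (x c s : nat -> R) : HS x c s ->
  HS (fun n => - x n) (fun n => - c n) (fun n => - s n).
Proof.
move=> [hx cs]; split; last by apply: is_cvgN.
by move=> k k0; rewrite /= (hx k k0); ring.
Qed.

Lemma HD1_neg (R : realType) (x c : nat -> R) : HD1 x c ->
  HD1 (fun n => - x n) (fun n => - c n).
Proof.
move=> h m; have [al [al0 [alf H]]] := h m; exists al; split => //; split => //.
by move=> n n0; rewrite /= normrN invrN mulrNN; apply: H.
Qed.

Lemma HD4_neg (R : realType) (x c : nat -> R) : HD4 x c ->
  HD4 (fun n => - x n) (fun n => - c n).
Proof.
move=> h e e0; have [m H] := h e e0; exists m => n n0.
by rewrite /= !normrN; apply: H.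
Qed.

Lemma HA3_neg (R : realType) (x c : nat -> R) : HA3 x c ->
  HA3 (fun n => - x n) (fun n => - c n).
Proof.
move=> h; rewrite /HA3.
have -> : (fun n => - c n.+1 * (- x n == 0)%:R) = (fun n => - (c n.+1 * (x n == 0)%:R)).
  by apply/funext => n; rewrite oppr_eq0 mulNr.
have h' := cvgN h; rewrite oppr0 in h'; exact: h'.
Qed.

Lemma pos_case' (R : realType) (x c s : nat -> R) (m N : nat) :
  HS x c s -> HD1 x c ->
  (forall n, (N <= n)%N -> (m.+1%:R)^-1 < x n) -> cvgn x.
Proof.
move=> [hx cs] hD1 hpos.
have [al [al0 [alf Hal]]] := hD1 m.
apply: (@pos_case R x c s al N) => //.
- move=> k Nk.
  have k0 : (0 < k)%N by apply: leq_ltn_trans Nk.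
  have Nk1 : (N <= k.-1)%N by rewrite -ltnS prednK.
  have xk := hpos _ Nk1.
  have d0 := @inv_pos R m.
  have xk' : (m.+1%:R)^-1 < `|x k.-1|.
    rewrite gtr0_norm; [exact: xk | exact: lt_trans d0 xk].
  have /andP[_ h] := Hal k k0 xk'.
  by apply: le_of_div h; exact: lt_trans d0 xk.
- by move=> n hn; exact: ltW (lt_trans (inv_pos _ _) (hpos n hn)).
Qed.

Lemma det_conv (R : realType) (x c s : nat -> R) :
  HS x c s -> HD1 x c -> HD4 x c -> HA3 x c -> cvgn x.
Proof.
move=> hS h1 h4 h3.
have [[m [N H]]|Hn1] := pselect (exists m N, forall n, (N <= n)%N -> (m.+1%:R : R)^-1 < x n).
  exact: pos_case' hS h1 H.
have [[m [N H]]|Hn2] := pselect (exists m N, forall n, (N <= n)%N -> (m.+1%:R : R)^-1 < - x n).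
  have e : (fun n => - (fun n => - x n) n) = x by apply/funext => n; rewrite opprK.
  rewrite -e; apply: is_cvgN; exact: pos_case' (HS_neg hS) (HD1_neg h1) H.
have io1 : forall m N, exists n, (N <= n)%N /\ x n <= (m.+1%:R)^-1.
  move=> m N; apply: contrapT => hne; apply: Hn1; exists m, N => n hn.
  rewrite ltNge; apply/negP => hle; apply: hne; exists n; split => //.
have io2 : forall m N, exists n, (N <= n)%N /\ - x n <= (m.+1%:R)^-1.
  move=> m N; apply: contrapT => hne; apply: Hn2; exists m, N => n hn.
  rewrite ltNge; apply/negP => hle; apply: hne; exists n; split => //.
have U1 := upper_case hS h1 h4 h3 io1.
have U2 := upper_case (HS_neg hS) (HD1_neg h1) (HD4_neg h4) (HA3_neg h3) io2.
apply/cvg_ex; exists 0; apply/cvgrPdist_le => e e0.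
have [N1 HN1] := U1 e e0; have [N2 HN2] := U2 e e0.
exists (maxn N1 N2) => // n hn.
have hn1 : (N1 <= n)%N by apply: leq_trans hn; apply: leq_maxl.
have hn2 : (N2 <= n)%N by apply: leq_trans hn; apply: leq_maxr.
have a1 := HN1 n hn1; have a2 := HN2 n hn2; rewrite /= in a2.
rewrite sub0r normrN ler_norml; lra.
Qed.

Definition HD2 (R : realType) (x c : nat -> R) := forall m : nat,
  exists k : nat -> R, (forall n, 0 <= k n <= 1) /\
    (\sum_(1 <= n <oo) (1 - k n)%:E = +oo)%E /\
    forall n, (0 < n)%N -> (m.+1%:R)^-1 < `|x n.-1| < m.+2%:R ->
      0 <= c n / x n.-1 <= k n.

Lemma HD2_neg (R : realType) (x c : nat -> R) : HD2 x c ->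
  HD2 (fun n => - x n) (fun n => - c n).
Proof.
move=> h m; have [k [k0 [kf H]]] := h m; exists k; split => //; split => //.
by move=> n n0; rewrite /= normrN invrN mulrNN; apply: H.
Qed.

Lemma d2_pos (R : realType) (x c s : nat -> R) (L : R) :
  HS x c s -> HD2 x c -> x @ \oo --> L -> 0 < L -> False.
Proof.
move=> [hx cs] h2 xL L0.
have L20 : 0 < L / 2 by rewrite divr_gt0.
have [M1 HM1] := inv_small L20.
pose m := (M1 + Num.truncn (2 * L))%N.
have dm : (m.+1%:R : R)^-1 <= L / 2 by apply: HM1; rewrite /m leq_addr.
have mL : 2 * L < m.+2%:R.
  apply: lt_le_trans (truncnS_gt _) _; rewrite ler_nat ltnS /m -addnS.
  by apply: leq_trans (leqnSn _) (leq_addl _ _).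
have [k [k01 [kinf Hk]]] := h2 m.
have [N0 _ HN0] := (cvgrPdist_lt _ _).1 xL _ L20.
have cy : cvgn (fun n => x n - s n).
  by apply: is_cvgB => //; apply/cvg_ex; exists L.
have [N1 HN1] := cauchy_seqR cy ltr01.
pose N := (N0 + N1)%N.
have NN0 : (N0 <= N)%N by rewrite /N leq_addr.
have NN1 : (N1 <= N)%N by rewrite /N leq_addl.
have xb : forall n, (N <= n)%N -> L / 2 < x n < 2 * L.
  move=> n hn; have := HN0 n (leq_trans NN0 hn); rewrite /=.
  rewrite ltr_distlC => /andP[g1 g2]; apply/andP; split; lra.
pose y n := x n - s n.
have step : forall n, (N < n)%N -> y n <= y n.-1 - (1 - k n) * (L / 2).
  move=> n hn.
  have n0 : (0 < n)%N by apply: leq_ltn_trans hn.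
  have hn1 : (N <= n.-1)%N by rewrite -ltnS prednK.
  have /andP[xl xu] := xb _ hn1.
  have xpos : 0 < x n.-1 by lra.
  have hm : (m.+1%:R)^-1 < `|x n.-1| < m.+2%:R.
    rewrite gtr0_norm //; apply/andP; split; [exact: le_lt_trans dm xl|lra].
  have /andP[_ hkn] := Hk n n0 hm.
  have cle := le_of_div xpos hkn.
  have /andP[k0 k1] := k01 n.
  have e1 : (1 - k n) * (L / 2) <= (1 - k n) * x n.-1.
    by rewrite ler_wpM2l ?subr_ge0 //; lra.
  rewrite /y (hx n n0).
  have e2 : k n * x n.-1 = x n.-1 - (1 - k n) * x n.-1 by ring.
  lra.
have sumb : forall t, \sum_(N.+1 <= j < (N + t).+1) (1 - k j) <= 2 / L.
  move=> t.
  have H : y (N + t)%N <= y N - (L / 2) * \sum_(N.+1 <= j < (N + t).+1) (1 - k j).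
    elim: t => [|t IH].
      by rewrite addn0 big_geq // mulr0 subr0.
    rewrite addnS big_nat_recr /=; last by rewrite ltnS leq_addr.
    have lt : (N < (N + t).+1)%N by rewrite ltnS leq_addr.
    have st := step (N + t).+1 lt; rewrite /= in st; lra.
  have c1 := HN1 (N + t)%N N (leq_trans NN1 (leq_addr _ _)) NN1.
  have c2 := ler_norm (y N - y (N + t)%N).
  rewrite distrC in c1.
  have : (L / 2) * \sum_(N.+1 <= j < (N + t).+1) (1 - k j) <= 1.
    rewrite /y in H c1 c2 |- *; lra.
  rewrite -(ler_pdivlMl _ _ L20) => h; apply: le_trans h _.
  by rewrite mulr1 invf_div.
have ksum : (\sum_(1 <= n <oo) (1 - k n)%:E <= (N%:R + 2 / L)%:E)%E.
  apply: lime_le.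
    by apply: is_cvg_nneseries => n _ _; rewrite lee_fin subr_ge0; case/andP: (k01 n).
  apply: nearW => n; rewrite sumEFin lee_fin.
  have kge : forall j, 0 <= 1 - k j by move=> j; case/andP: (k01 j) => _ ?; rewrite subr_ge0.
  apply: (@le_trans _ _ (\sum_(1 <= j < (n + N).+1) (1 - k j))).
    case: n => [|n]; first by rewrite big_geq // sumr_ge0.
    rewrite [X in _ <= X](big_cat_nat _ (n := n.+1)) //=; last by rewrite leqW // leq_addr.
    by rewrite lerDl sumr_ge0.
  rewrite (big_cat_nat _ (n := N.+1)) //=; last by rewrite ltnS leq_addl.
  apply: lerD.
    apply: (@le_trans _ _ (\sum_(1 <= j < N.+1) (1 : R))).
      by apply: ler_sum => j _; case/andP: (k01 j) => ? ?; lra.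
    by rewrite sumr_const_nat subSS subn0.
  by rewrite addnC; apply: sumb.
by move: ksum; rewrite kinf leye_eq.
Qed.

Lemma det_zero (R : realType) (x c s : nat -> R) :
  HS x c s -> HD2 x c -> cvgn x -> x @ \oo --> 0.
Proof.
move=> hS h2 /cvg_ex [L xL].
have [L0|L0|L0] := ltgtP L 0; last by rewrite -L0.
- exfalso; apply: (@d2_pos R (fun n => - x n) (fun n => - c n) (fun n => - s n) (- L)).
  + exact: HS_neg.
  + exact: HD2_neg.
  + exact: cvgN.
  + by rewrite oppr_gt0.
- by exfalso; apply: (d2_pos hS h2 xL L0).
Qed.

Unset Implicit Arguments.

Theorem theorem5 (d : measure_display) (T : measurableType d) (R : realType)
  (P : probability T R) (F : nat -> set (set T)) (X C : nat -> T -> R) :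
  filtration F ->
  (forall n, G_measurable (F n) (X n)) ->
  (forall n, P.-integrable setT (EFin \o X n)) ->
  (forall n, (0 < n)%N -> is_cond_exp P (F n.-1) (X n) (C n)) ->
  (* (D1) *)
  (forall delta : R, 0 < delta ->
     exists alpha : nat -> R, (forall n, 0 <= alpha n) /\
       (\sum_(1 <= n <oo) (alpha n)%:E < +oo)%E /\
       forall n, (0 < n)%N ->
         {ae P, forall x, delta < `|X n.-1 x| ->
            0 <= C n x / X n.-1 x <= 1 + alpha n}) ->
  (* (D4) *)
  (exists kappa : R -> R,
     (forall delta : R, 0 < delta ->
        forall n, (0 < n)%N ->
          {ae P, forall x, 0 < `|X n.-1 x| <= delta -> `|C n x| <= kappa delta})
     /\ kappa delta @[delta --> 0^'+] --> 0) ->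
  (* (A3) : U_n = E[X_n | F_{n-1}] 1{X_{n-1} = 0} -> 0 a.e. *)
  {ae P, forall x, (C n.+1 x * (X n x == 0)%:R) @[n --> \oo] --> 0} ->
  (* (A4) : M_{1,n} = sum_{i=1}^n (X_i - E[X_i | F_{i-1}]) has a finite limit a.e. *)
  {ae P, forall x, cvgn (fun n => \sum_(1 <= i < n.+1) (X i x - C i x))} ->
  {ae P, forall x, cvgn (fun n => X n x)} /\
  ((* (D2) *)
   (forall delta1 delta2 : R, 0 < delta1 -> delta1 < delta2 ->
      exists k : nat -> R, (forall n, 0 <= k n <= 1) /\
        (\sum_(1 <= n <oo) (1 - k n)%:E = +oo)%E /\
        forall n, (0 < n)%N ->
          {ae P, forall x, delta1 < `|X n.-1 x| < delta2 ->
             0 <= C n x / X n.-1 x <= k n}) ->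
   {ae P, forall x, X n x @[n --> \oo] --> 0}).
Proof.
move=> _ _ _ _ hD1 [kappa [hD4 hk]] hA3 hA4.
pose dl (m : nat) : R := (m.+1%:R)^-1.
have dl0 : forall m, 0 < dl m by move=> m; exact: inv_pos.
have aeD1 : {ae P, forall x, HD1 (fun n => X n x) (fun n => C n x)}.
  have H : forall m, {ae P, forall x, exists al : nat -> R, (forall n, 0 <= al n) /\
    (\sum_(1 <= n <oo) (al n)%:E < +oo)%E /\
    forall n, (0 < n)%N -> (m.+1%:R)^-1 < `|X n.-1 x| ->
      0 <= C n x / X n.-1 x <= 1 + al n}.
    move=> m; have [al [al0 [alf Hal]]] := hD1 (dl m) (dl0 m).
    have : {ae P, forall x, forall n, (0 < n)%N -> (m.+1%:R)^-1 < `|X n.-1 x| ->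
        0 <= C n x / X n.-1 x <= 1 + al n}.
      apply: ae_foralln => n; case: n => [|n].
        by apply: nearW.
      by apply: filterS (Hal n.+1 isT) => x h _.
    by apply: filterS => x h; exists al.
  by apply: filterS (ae_foralln H) => x h.
have aeD4 : {ae P, forall x, forall m n, (0 < n)%N ->
    0 < `|X n.-1 x| <= dl m -> `|C n x| <= kappa (dl m)}.
  apply: ae_foralln => m; apply: ae_foralln => n; case: n => [|n].
    by apply: nearW.
  by apply: filterS (hD4 (dl m) (dl0 m) n.+1 isT) => x h _.
have hkm : forall e : R, 0 < e -> exists m, `|kappa (dl m)| <= e.
  have hk' : (fun m => kappa (dl m)) @ \oo --> 0.
    move: hk => /cvg_at_rightP /(_ dl); apply; split.
      by move=> n; exact: dl0.
    exact: cvg_harmonic.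
  move=> e e0; have [N _ HN] := (cvgrPdist_le _ _).1 hk' e e0.
  by exists N; have := HN N (leqnn N); rewrite /= sub0r normrN.
pose s x n := \sum_(1 <= i < n.+1) (X i x - C i x).
have hS : forall x, cvgn (s x) -> HS (fun n => X n x) (fun n => C n x) (s x).
  move=> x cs; split => // -[|k] // _.
  rewrite /s big_nat_recr //=; ring.
have H4 : forall x, (forall m n, (0 < n)%N ->
    0 < `|X n.-1 x| <= dl m -> `|C n x| <= kappa (dl m)) ->
    HD4 (fun n => X n x) (fun n => C n x).
  move=> x h e e0; have [m hm] := hkm e e0; exists m => n n0 hx.
  by apply: le_trans (h m n n0 hx) _; apply: le_trans (ler_norm _) hm.
have conv : {ae P, forall x, cvgn (fun n => X n x)}.
  apply: filterS (filterI aeD1 (filterI aeD4 (filterI hA3 hA4))).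
  move=> x [h1 [h4 [h3 hs]]].
  exact: det_conv (hS x hs) h1 (H4 x h4) h3.
split => // hD2.
have aeD2 : {ae P, forall x, HD2 (fun n => X n x) (fun n => C n x)}.
  have H : forall m, {ae P, forall x, exists k : nat -> R, (forall n, 0 <= k n <= 1) /\
    (\sum_(1 <= n <oo) (1 - k n)%:E = +oo)%E /\
    forall n, (0 < n)%N -> (m.+1%:R)^-1 < `|X n.-1 x| < m.+2%:R ->
      0 <= C n x / X n.-1 x <= k n}.
    move=> m.
    have d12 : dl m < m.+2%:R.
      apply: le_lt_trans (inv_anti R (leq0n m)) _.
      by rewrite invr1 ltr1n.
    have [k [k01 [kf Hk]]] := hD2 (dl m) m.+2%:R (dl0 m) d12.
    have : {ae P, forall x, forall n, (0 < n)%N -> (m.+1%:R)^-1 < `|X n.-1 x| < m.+2%:R ->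
        0 <= C n x / X n.-1 x <= k n}.
      apply: ae_foralln => n; case: n => [|n].
        by apply: nearW.
      by apply: filterS (Hk n.+1 isT) => x h _.
    by apply: filterS => x h; exists k.
  by apply: filterS (ae_foralln H) => x h.
apply: filterS (filterI conv (filterI aeD2 hA4)).
move=> x [hc [h2 hs]].
exact: det_zero (hS x hs) h2 hc.
Qed.
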